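(* Let $k\ge1$, $n\ge2$, and let $\phi$ be a monotone $[k]$-edge-labeling of $K^{(2)}_n$. For each $0\le i\le k+1$, the symmetric difference of $X_i$ and $\hat X_i$ has size at most $2$; in particular $\big||X_i|-|\hat X_i|\big|\le2$.
   Context: $K^{(2)}_n$ is the complete graph on $[n]$ with its natural order. A $[k]$-edge-labeling $\phi$ assigns to each pair $uv$ ($u<v$) a label $\phi(uv)\in\{1,\dots,k\}$; it is monotone if $\phi(uv)\le\phi(vw)$ whenever $u<v<w$. Define $\Phi_L(1)=0$ and $\Phi_L(v)=\max\{\phi(uv):u<v\}$ for $v>1$; define $\Phi_R(n)=k+1$ and $\Phi_R(v)=\min\{\phi(vw):w>v\}$ for $v<n$. For $0\le i\le k+1$ let $X_i=\{v\in[n]:\Phi_L(v)=i\}$ and $\hat X_i=\{v\in[n]:\Phi_R(v)=i\}$. *)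

(* Defs.v *)
From mathcomp Require Import all_boot all_order.
Set Implicit Arguments. Unset Strict Implicit. Unset Printing Implicit Defensive.

(* Vertices of K_n^(2) are 'I_n (0-based: vertex v of [n] is ordinal v-1),
   ordered by the natural order on nat.  An edge-labeling is a function
   phi : 'I_n -> 'I_n -> nat, where phi u v is the label of the pair uv
   for u < v (values at u >= v are irrelevant). *)

Definition is_labeling (n k : nat) (phi : 'I_n -> 'I_n -> nat) : Prop :=
  forall u v : 'I_n, u < v -> 1 <= phi u v <= k.

Definition monotone (n : nat) (phi : 'I_n -> 'I_n -> nat) : Prop :=
  forall u v w : 'I_n, u < v -> v < w -> phi u v <= phi v w.

Definition PhiL (n : nat) (phi : 'I_n -> 'I_n -> nat) (v : 'I_n) : nat :=
  if v == 0 :> nat then 0 else \max_(u : 'I_n | u < v) phi u v.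

Definition PhiR (n k : nat) (phi : 'I_n -> 'I_n -> nat) (v : 'I_n) : nat :=
  if v.+1 == n then k.+1
  else \big[minn/k.+1]_(w : 'I_n | v < w) phi v w.

Definition X (n : nat) (phi : 'I_n -> 'I_n -> nat) (i : nat) : {set 'I_n} :=
  [set v | PhiL phi v == i].

Definition Xhat (n k : nat) (phi : 'I_n -> 'I_n -> nat) (i : nat) : {set 'I_n} :=
  [set v | PhiR k phi v == i].

(* Main.v *)
Require Import Defs.
From mathcomp Require Import all_boot all_order.
From mathcomp Require Import zify.

Lemma LR_le (k n : nat) (phi : 'I_n -> 'I_n -> nat) :
  is_labeling k phi -> monotone phi -> forall v, PhiL phi v <= PhiR k phi v.
Proof.
move=> hl hm v; rewrite /PhiL /PhiR.
case: eqP => [//|v0].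
have hmax : \max_(u : 'I_n | u < v) phi u v <= k.
  by apply/bigmax_leqP => u hu; case/andP: (hl u v hu).
case: eqP => [_|vn]; first by apply: leq_trans hmax _.
apply/bigmax_leqP => u hu.
elim/big_ind: _ => //.
- by case/andP: (hl u v hu) => _ h; apply: leqW.
- by move=> x y hx hy; rewrite leq_min hx hy.
- by move=> w hw; apply: hm.
Qed.

Lemma bigmin_le (I : finType) (P : pred I) (F : I -> nat) x i :
  P i -> \big[minn/x]_(j | P j) F j <= F i.
Proof.
move=> Pi; rewrite -big_filter.
have : i \in [seq j <- index_enum I | P j] by rewrite mem_filter Pi mem_index_enum.
elim: (filter _ _) => //= a s IH; rewrite inE big_cons => /orP[/eqP->|/IH h].
  exact: geq_minl.
exact: leq_trans (geq_minr _ _) h.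
Qed.

Lemma RL_le (k n : nat) (phi : 'I_n -> 'I_n -> nat) :
  forall v w : 'I_n, v < w -> PhiR k phi v <= PhiL phi w.
Proof.
move=> v w hvw; rewrite /PhiL /PhiR.
have -> : (v.+1 == n) = false.
  by apply/negbTE; move: (ltn_ord w) => ?; apply/eqP; lia.
have -> : (w == 0 :> nat) = false by apply/negbTE; apply/eqP; lia.
apply: (@leq_trans (phi v w)).
  exact: bigmin_le.
by rewrite (bigD1 v) //= leq_maxl.
Qed.

Theorem lemma4p8 (k n : nat) (phi : 'I_n -> 'I_n -> nat) :
  1 <= k -> 2 <= n -> is_labeling k phi -> monotone phi ->
  forall i : nat, i <= k.+1 ->
    #|(X phi i :\: Xhat k phi i) :|: (Xhat k phi i :\: X phi i)| <= 2 /\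
    #|X phi i| <= #|Xhat k phi i| + 2 /\ #|Xhat k phi i| <= #|X phi i| + 2.
Proof.
move=> hk hn hl hm i hi.
have LR := @LR_le k n phi hl hm.
have RL := @RL_le k n phi.
have hA : #|X phi i :\: Xhat k phi i| <= 1.
  apply/card_le1_eqP => v w; rewrite !inE.
  move=> /andP[/eqP h1 /eqP h2] /andP[/eqP h3 /eqP h4].
  case: (ltngtP v w) => [lt|lt|/val_inj //].
  - have := RL _ _ lt; have := LR v; lia.
  - have := RL _ _ lt; have := LR w; lia.
have hB : #|Xhat k phi i :\: X phi i| <= 1.
  apply/card_le1_eqP => v w; rewrite !inE.
  move=> /andP[/eqP h1 /eqP h2] /andP[/eqP h3 /eqP h4].
  case: (ltngtP v w) => [lt|lt|/val_inj //].
  - have := RL _ _ lt; have := LR v; have := LR w; lia.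
  - have := RL _ _ lt; have := LR v; have := LR w; lia.
have hU := cardsU (X phi i :\: Xhat k phi i) (Xhat k phi i :\: X phi i).
have h1 := cardsID (Xhat k phi i) (X phi i).
have h2 := cardsID (X phi i) (Xhat k phi i).
have h3 : #|X phi i :&: Xhat k phi i| <= #|Xhat k phi i|
  by apply/subset_leq_card/subsetIr.
have h4 : #|Xhat k phi i :&: X phi i| <= #|X phi i|
  by apply/subset_leq_card/subsetIr.
split; first lia.
lia.
Qed.
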